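(* Let $S$ be an instance of Max $r(n)$-Lin-2 AA (with parameter $k$) in which no two equations have the same left-hand side, i.e. $\alpha_j\neq\alpha_p$ for all $j\neq p$. Suppose that some run of Algorithm $\mathcal{A}$ (defined in the context) on $S$ marks $k$ equations. Then $S$ is a YES-instance, i.e. there is an assignment of values in $\mathbb{F}_2$ to $z_1,\dots,z_n$ such that the total weight of satisfied equations is at least $(W+k)/2$.
   Context: Max $r(n)$-Lin-2 AA: for a fixed function $r(n)$, an instance is a system $S$ of $m$ linear equations over $\mathbb{F}_2$ in variables $z_1,\dots,z_n$, Equation $j$ being $\sum_{i\in\alpha_j} z_i=b_j$ with $\emptyset\neq\alpha_j\subseteq\{1,\dots,n\}$, $|\alpha_j|\le r=r(n)$, $b_j\in\mathbb{F}_2$, and a positive integer weight $w_j$; together with a nonnegative integer parameter $k$. It is assumed that every variable appears in at least one equation. Let $W=w_1+\cdots+w_m$. The instance is a YES-instance if some assignment satisfies equations of total weight at least $(W+k)/2$. Combining rule: if two equations $\sum_{i\in\alpha}z_i=b'$ (weight $w'$) and $\sum_{i\in\alpha}z_i=b''$ (weight $w''$) have the same left-hand side, replace them by one equation with that left-hand side: if $b'=b''$, with right-hand side $b'$ and weight $w'+w''$; otherwise, the one of larger weight, with new weight $|w'-w''|$; an equation of resulting weight $0$ is deleted. Algorithm $\mathcal{A}$: initially nothing is marked. While $S\neq\emptyset$ and fewer than $k$ equations are marked: (1) for each $i$ compute $\rho_i$, the number of equations currently in $S$ containing $z_i$; (2) choose a variable $z_l$ still occurring in $S$ with minimum $\rho_l$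 and mark it; (3) choose an arbitrary equation $\sum_{i\in\alpha}z_i=b$ of $S$ containing $z_l$; (4) mark this equation and delete it from $S$; (5) replace every other equation $\sum_{i\in\alpha'}z_i=b'$ of $S$ containing $z_l$ by $\sum_{i\in\alpha\triangle\alpha'}z_i=b+b'$ (keeping its weight), where $\triangle$ is symmetric difference; (6) apply the combining rule exhaustively (deleting equations of weight $0$). *)

(* Defs.v *)
From mathcomp Require Import all_boot.
Set Implicit Arguments. Unset Strict Implicit. Unset Printing Implicit Defensive.

(* An equation  sum_{i in alpha} z_i = b  with weight w, over variables 'I_n. *)
Definition equation (n : nat) := ({set 'I_n} * bool * nat)%type.
Definition eq_lhs {n} (e : equation n) : {set 'I_n} := e.1.1.
Definition eq_rhs {n} (e : equation n) : bool := e.1.2.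
Definition eq_w {n} (e : equation n) : nat := e.2.

Definition symdiff {n} (A B : {set 'I_n}) : {set 'I_n} := (A :\: B) :|: (B :\: A).

Definition valid_instance (r : nat -> nat) {n} (S : seq (equation n)) : Prop :=
  (forall e, e \in S -> [/\ eq_lhs e != set0, #|eq_lhs e| <= r n & 0 < eq_w e])
  /\ (forall i : 'I_n, has (fun e => i \in eq_lhs e) S).

Definition total_weight {n} (S : seq (equation n)) : nat := \sum_(e <- S) eq_w e.

Definition satisfies {n} (z : 'I_n -> bool) (e : equation n) : bool :=
  \big[addb/false]_(i in eq_lhs e) z i == eq_rhs e.

Definition sat_weight {n} (z : 'I_n -> bool) (S : seq (equation n)) : nat :=
  \sum_(e <- S | satisfies z e) eq_w e.

Definition yes_instance {n} (S : seq (equation n)) (k : nat) : Prop :=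
  exists z : 'I_n -> bool, total_weight S + k <= 2 * sat_weight z S.

(* Combining rule applied to two equations with the same LHS: result
   (None if the resulting weight is 0, i.e. the equation is deleted). *)
Definition combine {n} (e1 e2 : equation n) : option (equation n) :=
  let w := if eq_rhs e1 == eq_rhs e2 then (eq_w e1 + eq_w e2)
           else if eq_w e2 <= eq_w e1 then eq_w e1 - eq_w e2 else eq_w e2 - eq_w e1 in
  let b := if eq_rhs e1 == eq_rhs e2 then eq_rhs e1
           else if eq_w e2 <= eq_w e1 then eq_rhs e1 else eq_rhs e2 in
  if w == 0 then None else Some (eq_lhs e1, b, w).

Inductive combine_step {n} : seq (equation n) -> seq (equation n) -> Prop :=
| CombStep S1 S2 S3 e1 e2 :
    eq_lhs e1 = eq_lhs e2 ->
    combine_step (S1 ++ e1 :: S2 ++ e2 :: S3)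
                 (S1 ++ S2 ++ S3 ++ (if combine e1 e2 is Some e then [:: e] else [::])).

Inductive combine_star {n} : seq (equation n) -> seq (equation n) -> Prop :=
| CombRefl S : combine_star S S
| CombTrans S S' S'' : combine_step S S' -> combine_star S' S'' -> combine_star S S''.

Definition combine_exhaustive {n} (S S' : seq (equation n)) : Prop :=
  combine_star S S' /\ uniq (map eq_lhs S').

Definition rho {n} (S : seq (equation n)) (i : 'I_n) : nat :=
  count (fun e => i \in eq_lhs e) S.

Definition occurs {n} (S : seq (equation n)) (i : 'I_n) : bool :=
  has (fun e => i \in eq_lhs e) S.

(* One iteration of the while-loop of Algorithm A, with parameter k:
   state = (current system, number of marked equations). *)
Inductive alg_step (k : nat) {n} : seq (equation n) -> nat -> seq (equation n) -> nat -> Prop :=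
| AlgStep S m (l : 'I_n) S1 S2 e S' :
    S != [::] -> m < k ->
    occurs S l ->
    (forall i, occurs S i -> rho S l <= rho S i) ->
    S = S1 ++ e :: S2 ->
    l \in eq_lhs e ->
    combine_exhaustive
      (map (fun e' => if l \in eq_lhs e'
                      then (symdiff (eq_lhs e) (eq_lhs e'), eq_rhs e (+) eq_rhs e', eq_w e')
                      else e') (S1 ++ S2)) S' ->
    alg_step k S m S' m.+1.

Inductive alg_run (k : nat) {n} : seq (equation n) -> nat -> seq (equation n) -> nat -> Prop :=
| RunRefl S m : alg_run k S m S m
| RunStep S m S' m' S'' m'' :
    alg_step k S m S' m' -> alg_run k S' m' S'' m'' -> alg_run k S m S'' m''.

(* Main.v *)
Require Import Defs.
From mathcomp Require Import all_boot all_order all_algebra.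
Import GRing.Theory Num.Theory Order.TTheory.
Set Implicit Arguments. Unset Strict Implicit. Unset Printing Implicit Defensive.
Local Open Scope ring_scope.

Definition par {n} (z : 'I_n -> bool) (A : {set 'I_n}) : bool :=
  \big[addb/false]_(i in A) z i.

Lemma par_mk n (z : 'I_n -> bool) A : par z A = \big[addb/false]_i ((i \in A) && z i).
Proof. by rewrite /par big_mkcond; apply: eq_bigr => i _; case: (i \in A). Qed.

Lemma par_symdiff n (z : 'I_n -> bool) A B : par z (symdiff A B) = par z A (+) par z B.
Proof.
rewrite !par_mk -big_split /=; apply: eq_bigr => i _.
by rewrite /symdiff in_setU !in_setD; case: (i \in A); case: (i \in B); case: (z i).
Qed.

Lemma par_flip n (z z' : 'I_n -> bool) i A :
  (forall j, z' j = if j == i then ~~ z j else z j) -> par z' A = (i \in A) (+) par z A.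
Proof.
move=> Hz; rewrite !par_mk (bigD1 i) //= [X in _ = _ (+) X](bigD1 i) //= Hz eqxx.
rewrite (eq_bigr (fun j => (j \in A) && z j)); last by move=> j /negbTE Hj; rewrite Hz Hj.
by case: (i \in A); case: (z i); rewrite /= ?negbK.
Qed.

Lemma satE n (z : 'I_n -> bool) e : satisfies z e = (par z (eq_lhs e) == eq_rhs e).
Proof. by []. Qed.

Definition ce {n} (z : 'I_n -> bool) (e : equation n) : int :=
  if satisfies z e then (eq_w e)%:Z else - (eq_w e)%:Z.
Definition exc {n} (z : 'I_n -> bool) (T : seq (equation n)) : int :=
  \sum_(e <- T) ce z e.

Lemma exc_sat n (z : 'I_n -> bool) T :
  (total_weight T)%:Z + exc z T = (2 * sat_weight z T)%N%:Z.
Proof.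
elim: T => [|e T IH]; first by rewrite /total_weight /exc /sat_weight !big_nil.
rewrite /total_weight /sat_weight /exc !big_cons.
rewrite -/(total_weight T) -/(sat_weight z T).
have -> : \sum_(j <- T) ce z j = exc z T by [].
rewrite /ce; case: ifP => _.
  rewrite mulnDr [in RHS]PoszD -IH mul2n -addnn !PoszD.
  by rewrite addrACA.
rewrite -IH PoszD.
by rewrite addrACA addrN add0r.
Qed.

Lemma ce_combine n (z : 'I_n -> bool) e1 e2 : eq_lhs e1 = eq_lhs e2 ->
  ce z e1 + ce z e2 = (if combine e1 e2 is Some e then ce z e else 0).
Proof.
move: e1 e2 => [[A1 b1] w1] [[A2 b2] w2]; rewrite /eq_lhs /= => HA; subst A2.
rewrite /combine /ce /satisfies /eq_lhs /eq_rhs /eq_w /=.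
case: b1; case: b2 => /=.
all: case: (leqP w2 w1) => Hw; [have Hw' := Hw | have Hw' := ltnW Hw].
all: match goal with |- context [ if ?c == 0%N then _ else _ ] => case: (c =P 0%N) => H0 end => /=.
all: case E: (\big[addb/false]_(i in A1) z i) => /=.
all: try (move/(congr1 Posz): H0; rewrite ?PoszD ?(esym (subzn Hw')) => H0).
all: rewrite ?PoszD ?(esym (subzn Hw')) ?opprD //.
all: try (by rewrite -opprD H0 oppr0).
all: try (by rewrite -opprB H0 oppr0).
all: try (by rewrite addrC H0).
all: try (by rewrite addrC).
all: try (by rewrite opprB addrC).
all: try (by rewrite opprB).
all: try exact H0.
all: try (by rewrite addrC -opprB H0 oppr0).
all: by rewrite opprK addrC.
Qed.

Definition Pe {n} (e : equation n) : bool := (eq_lhs e != set0) && (0 < eq_w e)%N.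
Definition inv {n} (S : seq (equation n)) : bool := all Pe S && uniq (map eq_lhs S).

Lemma combine_Some n (e1 e2 e : equation n) :
  combine e1 e2 = Some e -> eq_lhs e = eq_lhs e1 /\ (0 < eq_w e)%N.
Proof.
rewrite /combine; case: eqP => // H [<-]; split => //.
by rewrite lt0n /eq_w /=; apply/eqP.
Qed.

Lemma step_exc n (z : 'I_n -> bool) S S' : combine_step S S' -> exc z S' = exc z S.
Proof.
case=> S1 S2 S3 e1 e2 H.
have := ce_combine z H.
rewrite /exc !big_cat !big_cons !big_cat /=.
case: (combine e1 e2) => [e|] E.
  rewrite big_seq1 big_cons -E.
  congr (_ + _); rewrite [RHS]addrCA; congr (_ + _); by rewrite addrC -addrA.
rewrite big_nil addr0 big_cons.
have E2 : ce z e2 = - ce z e1 by apply/eqP; rewrite -addr_eq0 addrC E.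
rewrite E2 addrCA.
by rewrite addrCA; congr (_ + _); rewrite [RHS]addrCA addNKr.
Qed.

Lemma step_P n (S S' : seq (equation n)) : combine_step S S' -> all Pe S -> all Pe S'.
Proof.
case=> S1 S2 S3 e1 e2 H.
move/allP => HA; apply/allP => x; rewrite !mem_cat => /or4P [Hx|Hx|Hx|Hx].
- by apply: HA; rewrite !mem_cat Hx.
- by apply: HA; rewrite !(mem_cat, inE) Hx !orbT.
- by apply: HA; rewrite !(mem_cat, inE) Hx !orbT.
move: Hx; case E: (combine e1 e2) => [e|] //; rewrite inE => /eqP ->.
have [H3 H4] := combine_Some E.
have : Pe e1 by apply: HA; rewrite !(mem_cat, inE) eqxx !orbT.
by rewrite /Pe H3 H4 andbT; case/andP.
Qed.

Lemma star_exc n (z : 'I_n -> bool) S S' : combine_star S S' -> exc z S' = exc z S.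
Proof. by elim=> // S0 S1 S2 Hs _ IH; rewrite IH (step_exc z Hs). Qed.

Lemma star_P n (S S' : seq (equation n)) : combine_star S S' -> all Pe S -> all Pe S'.
Proof. by elim=> // S0 S1 S2 Hs _ IH H; apply: IH; apply: step_P Hs H. Qed.

Definition fsub {n} (e : equation n) (l : 'I_n) (e' : equation n) : equation n :=
  if l \in eq_lhs e' then (symdiff (eq_lhs e) (eq_lhs e'), eq_rhs e (+) eq_rhs e', eq_w e') else e'.

Lemma fsub_l n (e e' : equation n) l : l \in eq_lhs e -> l \notin eq_lhs (fsub e l e').
Proof.
move=> Hl; rewrite /fsub; case: ifP => H //=; last by rewrite H.
by rewrite /eq_lhs /= /symdiff in_setU !in_setD -/(eq_lhs e) -/(eq_lhs e') H Hl.
Qed.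

Lemma fsub_w n (e e' : equation n) l : eq_w (fsub e l e') = eq_w e'.
Proof. by rewrite /fsub; case: ifP. Qed.

Lemma fsub_sat n (z : 'I_n -> bool) (e e' : equation n) l :
  satisfies z e -> satisfies z (fsub e l e') = satisfies z e'.
Proof.
rewrite /fsub satE => /eqP H; case: ifP => // _.
rewrite !satE /eq_lhs /eq_rhs /= par_symdiff -/(eq_lhs e) H.
rewrite -/(eq_rhs e) -/(eq_rhs e'); by case: (eq_rhs e); case: (par z _); case: (eq_rhs e').
Qed.

Lemma symdiff0 n (A B : {set 'I_n}) : symdiff A B = set0 -> A = B.
Proof.
move=> H; apply/setP => i; move/setP/(_ i): H.
by rewrite /symdiff in_setU !in_setD in_set0; case: (i \in A); case: (i \in B).
Qed.

Lemma fsub_P n (e e' : equation n) l : eq_lhs e' != eq_lhs e -> Pe e' -> Pe (fsub e l e').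
Proof.
move=> Hne; rewrite /fsub; case: ifP => // _ /andP [_ Hw].
rewrite /Pe /eq_lhs /eq_w /= Hw andbT.
apply/eqP => /symdiff0 H; by rewrite /eq_lhs H eqxx in Hne.
Qed.

Definition flipf {n} (z : 'I_n -> bool) (l : 'I_n) : 'I_n -> bool :=
  fun j => if j == l then ~~ z j else z j.

Lemma ce_flip n (z : 'I_n -> bool) l e : l \notin eq_lhs e -> ce (flipf z l) e = ce z e.
Proof. by move=> H; rewrite /ce !satE (@par_flip _ z _ l) // (negbTE H). Qed.

Lemma exc_mid n (z : 'I_n -> bool) S1 e S2 : exc z (S1 ++ e :: S2) = ce z e + exc z (S1 ++ S2).
Proof. by rewrite /exc !big_cat big_cons addrCA. Qed.

Lemma uniq_mid n (S1 S2 : seq (equation n)) e :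
  uniq (map eq_lhs (S1 ++ e :: S2)) -> eq_lhs e \notin map eq_lhs (S1 ++ S2).
Proof.
have Hp : perm_eq (S1 ++ e :: S2) (e :: S1 ++ S2) by rewrite -cat1s perm_catCA.
by rewrite (perm_uniq (perm_map eq_lhs Hp)) /= => /andP [].
Qed.

Lemma alg_step_main k n (S S' : seq (equation n)) m m' :
  alg_step k S m S' m' -> inv S ->
  inv S' /\ m' = m.+1 /\ forall y, exists z, 1 + exc y S' <= exc z S.
Proof.
case=> {S m S' m'} S m l S1 S2 e S' _ _ _ _ -> Hl [Hstar Hu'] /andP [HP Hu].
have Hst : combine_star (map (fsub e l) (S1 ++ S2)) S' := Hstar.
have Hnot := uniq_mid Hu.
move: HP; rewrite all_cat /= => /and3P [HP1 He HP2].
have HP12 : all Pe (S1 ++ S2) by rewrite all_cat HP1 HP2.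
split; [|split => //].
  rewrite /inv Hu' andbT; apply: (star_P Hst).
  rewrite all_map; apply/allP => e' He' /=; apply: fsub_P; last by move/allP: HP12; apply.
  by apply: contraNneq Hnot => <-; apply: map_f.
move=> y.
set z := if satisfies y e then y else flipf y l.
have Hsz : satisfies z e.
  rewrite /z; case: ifP => // Hy.
  move: Hy; rewrite !satE (@par_flip _ y (flipf y l) l (eq_lhs e)) // Hl.
  by case: (par y _); case: (eq_rhs e).
have Hzy : forall e', l \notin eq_lhs e' -> ce z e' = ce y e'.
  by move=> e' H; rewrite /z; case: ifP => // _; rewrite ce_flip.
exists z.
rewrite exc_mid.
have -> : exc z (S1 ++ S2) = exc y (map (fsub e l) (S1 ++ S2)).
  rewrite /exc big_map; apply: eq_bigr => e' _.
  by rewrite -Hzy ?fsub_l // /ce fsub_sat // fsub_w.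
rewrite (star_exc y Hst).
rewrite lerD2r /ce Hsz lez_nat.
by case/andP: He.
Qed.

Lemma run_main k n (S S' : seq (equation n)) m m' :
  alg_run k S m S' m' -> inv S ->
  inv S' /\ forall y, exists z, (m'%:Z + exc y S' <= m%:Z + exc z S).
Proof.
elim=> [S0 m0 | S0 m0 S1 m1 S2 m2 Hs Hr IH] Hinv.
  by split => // y; exists y.
have [Hinv1 [Hm Hst]] := alg_step_main Hs Hinv.
have [Hinv2 H2] := IH Hinv1.
split => // y.
have [z1 Hz1] := H2 y.
have [z Hz] := Hst z1.
exists z; apply: (le_trans Hz1).
by rewrite Hm intS -addrA addrCA lerD2l.
Qed.

Definition flipF {n} (i : 'I_n) (y : {ffun 'I_n -> bool}) : {ffun 'I_n -> bool} :=
  [ffun j => if j == i then ~~ y j else y j].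

Lemma flipFK n (i : 'I_n) : involutive (flipF i).
Proof. by move=> y; apply/ffunP => j; rewrite !ffunE; case: eqP => // _; rewrite negbK. Qed.

Lemma exists_nonneg n (T : seq (equation n)) :
  all (fun e => eq_lhs e != set0) T -> exists y : 'I_n -> bool, 0 <= exc y T.
Proof.
move=> HT.
have Hsum : \sum_(y : {ffun 'I_n -> bool}) exc y T = 0.
  rewrite /exc exchange_big /=; apply: big1_seq => e /andP [_ He].
  have /set0Pn [i Hi] := allP HT e He.
  set s := \sum_(y : {ffun 'I_n -> bool}) ce y e.
  have Hs : s = - s.
    rewrite {1}/s (reindex_inj (inv_inj (flipFK i))) /= -sumrN.
    apply: eq_bigr => y _.
    rewrite /ce !satE (@par_flip _ y (flipF i y) i) ?Hi; last by move=> j; rewrite ffunE.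
    by case: (par y _); case: (eq_rhs e); rewrite /= ?opprK.
  apply/eqP; move/eqP: Hs; rewrite -subr_eq0 opprK -mulr2n mulrn_eq0 /=.
  done.
case: (boolP [exists y : {ffun 'I_n -> bool}, 0 <= exc y T]).
  by case/existsP => y Hy; exists y.
move/existsPn => Hneg; exfalso.
have H0 := Hneg [ffun => false].
move: Hsum; rewrite (bigD1 [ffun => false]) //=.
move=> Heq; have : exc [ffun => false] T + \sum_(i | i != [ffun => false]) exc i T < 0.
  rewrite -(addr0 0) ltr_leD //; first by rewrite ltNge.
  apply: sumr_le0 => y _; apply: ltW; by rewrite ltNge.
by rewrite Heq ltxx.
Qed.

Lemma final_ineq n (z y : 'I_n -> bool) (S S' : seq (equation n)) (k : nat) :
  k%:Z + exc y S' <= 0%:Z + exc z S -> 0 <= exc y S' ->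
  (total_weight S + k <= 2 * sat_weight z S)%N.
Proof.
move=> H1 H2; rewrite -lez_nat PoszD -exc_sat lerD2l.
rewrite add0r in H1; apply: le_trans H1; by rewrite lerDl.
Qed.

Local Close Scope ring_scope.

Theorem lemma2 (r : nat -> nat) (n k : nat) (S : seq (equation n)) :
  valid_instance r S ->
  uniq (map eq_lhs S) ->
  (exists S' : seq (equation n), alg_run k S 0 S' k) ->
  yes_instance S k.
Proof.
move=> [HV _] Hu [S' Hrun].
have Hinv : inv S.
  rewrite /inv Hu andbT; apply/allP => e He.
  by have [h1 _ h3] := HV e He; rewrite /Pe h1 h3.
have [/andP [HP' _] H] := run_main Hrun Hinv.
have [y Hy] : exists y : 'I_n -> bool, (0 <= exc y S')%R.
  by apply: exists_nonneg; apply: sub_all HP' => e /andP [].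
have [z Hz] := H y.
by exists z; apply: final_ineq Hz Hy.
Qed.
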